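(* Let $T\in\mathbb R^{m\times n}$ be injective and satisfy the positive cone condition, $y\in\mathbb R^m$, and $\lambda>0$. Then there exists $\varepsilon\in(0,\lambda)$ such that $|x_\mu^i|\le|x_\lambda^i|$ for all $i\in I(\lambda)$ and all $\mu\in[\lambda-\varepsilon,\lambda]$.
   Context: For $\lambda>0$, $x_\lambda$ is the unique minimizer of $x\mapsto\frac{\lambda}{2}\|Tx-y\|_2^2+\|x\|_1$ on $\mathbb R^n$; $I(\lambda)=\{i:x_\lambda^i\ne0\}$. Positive cone condition: for every nonempty $J\subset\{1,\dots,n\}$, with $T^J$ the submatrix of columns indexed by $J$ and $S_J=((T^J)^TT^J)^{-1}$, one has $(S_J)_{i,i}-\sum_{j\ne i}|(S_J)_{i,j}|\ge0$ for all $i\in J$. *)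

(* Defs.v *)
From mathcomp Require Import all_boot all_order all_algebra.
From mathcomp Require Import reals.
Set Implicit Arguments. Unset Strict Implicit. Unset Printing Implicit Defensive.
Import Order.TTheory GRing.Theory Num.Theory.
Local Open Scope ring_scope.

Definition lasso_obj (R : realType) (m n : nat) (T : 'M[R]_(m, n))
  (y : 'cV[R]_m) (lam : R) (x : 'cV[R]_n) : R :=
  lam / 2 * (\sum_(k < m) ((T *m x - y) k 0) ^+ 2) + \sum_(i < n) `|x i 0|.

Definition is_lasso_minimizer (R : realType) (m n : nat) (T : 'M[R]_(m, n))
  (y : 'cV[R]_m) (lam : R) (x : 'cV[R]_n) : Prop :=
  forall z : 'cV[R]_n, lasso_obj T y lam x <= lasso_obj T y lam z.

Definition supp (R : realType) (n : nat) (x : 'cV[R]_n) : {set 'I_n} :=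
  [set i | x i 0 != 0].

Definition colsubJ (R : realType) (m n : nat) (T : 'M[R]_(m, n))
  (J : {set 'I_n}) : 'M[R]_(m, #|J|) :=
  colsub (fun k : 'I_#|J| => enum_val k) T.

Definition S_J (R : realType) (m n : nat) (T : 'M[R]_(m, n))
  (J : {set 'I_n}) : 'M[R]_#|J| :=
  invmx ((colsubJ T J)^T *m colsubJ T J).

(* Positive cone condition: diagonal dominance of S_J for all nonempty J. *)
Definition positive_cone_condition (R : realType) (m n : nat)
  (T : 'M[R]_(m, n)) : Prop :=
  forall J : {set 'I_n}, J != set0 ->
    forall i : 'I_#|J|,
      0 <= S_J T J i i - \sum_(j < #|J| | j != i) `|S_J T J i j|.

(* Main.v *)
Require Import Defs.
From mathcomp Require Import all_boot all_order all_algebra.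
From mathcomp Require Import reals.
From mathcomp Require Import ring lra.
Import Order.TTheory GRing.Theory Num.Theory.
Set Implicit Arguments. Unset Strict Implicit. Unset Printing Implicit Defensive.
Local Open Scope ring_scope.

Definition inner (R : realType) (p : nat) (a b : 'cV[R]_p) : R := (a^T *m b) 0 0.

Lemma innerE (R : realType) (p : nat) (a b : 'cV[R]_p) :
  inner a b = \sum_k a k 0 * b k 0.
Proof. by rewrite /inner mxE; apply: eq_bigr => k _; rewrite mxE. Qed.

Lemma inner_sym (R : realType) (p : nat) (a b : 'cV[R]_p) : inner a b = inner b a.
Proof. by rewrite !innerE; apply: eq_bigr => k _; rewrite mulrC. Qed.

Lemma innerDl (R : realType) (p : nat) (a b c : 'cV[R]_p) :
  inner (a + b) c = inner a c + inner b c.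
Proof. by rewrite !innerE -big_split; apply: eq_bigr => k _; rewrite mxE mulrDl. Qed.

Lemma innerZl (R : realType) (p : nat) (t : R) (a c : 'cV[R]_p) :
  inner (t *: a) c = t * inner a c.
Proof. by rewrite !innerE mulr_sumr; apply: eq_bigr => k _; rewrite mxE mulrA. Qed.

Lemma innerNl (R : realType) (p : nat) (a c : 'cV[R]_p) :
  inner (- a) c = - inner a c.
Proof. by rewrite -scaleN1r innerZl mulN1r. Qed.

Lemma innerT (R : realType) (m n : nat) (T : 'M[R]_(m, n)) (u : 'cV[R]_n) (b : 'cV[R]_m) :
  inner (T *m u) b = inner u (T^T *m b).
Proof. by rewrite /inner trmx_mul mulmxA. Qed.

Lemma inner_ge0 (R : realType) (p : nat) (a : 'cV[R]_p) : 0 <= inner a a.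
Proof. by rewrite innerE; apply: sumr_ge0 => k _; rewrite -expr2 sqr_ge0. Qed.

Lemma inner_eq0 (R : realType) (p : nat) (a : 'cV[R]_p) : inner a a = 0 -> a = 0.
Proof.
rewrite innerE => H; apply/matrixP => k j; rewrite (ord1 j) mxE.
have H2 : forall i : 'I_p, predT i -> 0 <= a i 0 * a i 0.
  by move=> i _; rewrite -expr2 sqr_ge0.
move: (@psumr_eq0P _ _ _ _ H2 H k isT) => /eqP; rewrite mulf_eq0 orbb => /eqP //.
Qed.

Definition dvec (R : realType) (n : nat) (i : 'I_n) : 'cV[R]_n :=
  \col_j ((j == i)%:R).

Lemma inner_dvec (R : realType) (n : nat) (i : 'I_n) (b : 'cV[R]_n) :
  inner (dvec R i) b = b i 0.
Proof.
rewrite innerE (bigD1 i) //= big1 ?addr0; first by rewrite mxE eqxx mul1r.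
by move=> j /negPf ji; rewrite mxE ji mul0r.
Qed.

Lemma gram_sym (R : realType) (m n : nat) (T : 'M[R]_(m, n)) (u w : 'cV[R]_n) :
  inner u (T^T *m T *m w) = inner w (T^T *m T *m u).
Proof.
by rewrite -mulmxA -innerT inner_sym -mulmxA -innerT inner_sym.
Qed.

Lemma obj_diff (R : realType) (m n : nat) (T : 'M[R]_(m, n)) (y : 'cV[R]_m)
  (mu : R) (x z : 'cV[R]_n) :
  lasso_obj T y mu z - lasso_obj T y mu x =
  mu / 2 * inner (T *m (z - x)) (T *m (z - x))
  + \sum_(j < n) (`|z j 0| - `|x j 0| - mu * (T^T *m (y - T *m x)) j 0 * (z - x) j 0).
Proof.
have sq : forall a : 'cV[R]_m, \sum_(k < m) (a k 0) ^+ 2 = inner a a.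
  by move=> a; rewrite innerE; apply: eq_bigr => k _; rewrite expr2.
rewrite /lasso_obj !sq.
have -> : T *m z - y = T *m (z - x) + (T *m x - y).
  by rewrite mulmxBr addrA subrK.
have -> : \sum_(j < n) (`|z j 0| - `|x j 0| - mu * (T^T *m (y - T *m x)) j 0 * (z - x) j 0)
  = \sum_(j < n) `|z j 0| - \sum_(j < n) `|x j 0|
    + mu * inner (T *m (z - x)) (T *m x - y).
  rewrite !sumrB innerT innerE mulr_sumr; congr (_ + _).
  rewrite -sumrN; apply: eq_bigr => k _.
  rewrite -[T *m x - y]opprB mulmxN [X in _ * (_ * X)]mxE; ring.
set a := T *m (z - x). set b := T *m x - y.
have -> : inner (a + b) (a + b) = inner a a + 2 * inner a b + inner b b.
  rewrite !innerE mulr_sumr -!big_split; apply: eq_bigr => k _.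
  rewrite [(a + b) k 0]mxE /=; ring.
by field.
Qed.

Definition corr (R : realType) (m n : nat) (T : 'M[R]_(m, n)) (y : 'cV[R]_m)
  (x : 'cV[R]_n) : 'cV[R]_n := T^T *m (y - T *m x).

Definition KKT (R : realType) (m n : nat) (T : 'M[R]_(m, n)) (y : 'cV[R]_m)
  (mu : R) (x : 'cV[R]_n) : Prop :=
  forall j, `|mu * corr T y x j 0| <= 1 /\ mu * corr T y x j 0 * x j 0 = `|x j 0|.

Lemma kkt_lower (R : realType) (m n : nat) (T : 'M[R]_(m, n)) (y : 'cV[R]_m)
  (mu : R) (x z : 'cV[R]_n) : KKT T y mu x ->
  mu / 2 * inner (T *m (z - x)) (T *m (z - x)) <= lasso_obj T y mu z - lasso_obj T y mu x.
Proof.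
move=> K; rewrite obj_diff lerDl; apply: sumr_ge0 => j _.
have [K1 K2] := K j; rewrite /corr in K1 K2.
rewrite [(z - x) j 0]mxE [(- x) j 0]mxE mulrDr -K2 mulrN opprD opprK addrA.
rewrite addrAC subrK subr_ge0.
apply: (le_trans (ler_norm _)); rewrite normrM.
by rewrite -[X in _ <= X]mul1r ler_wpM2r.
Qed.

Lemma kkt_unique (R : realType) (m n : nat) (T : 'M[R]_(m, n)) (y : 'cV[R]_m)
  (mu : R) (x z : 'cV[R]_n) :
  injective (fun v : 'cV[R]_n => T *m v) -> 0 < mu -> KKT T y mu x ->
  is_lasso_minimizer T y mu z -> z = x.
Proof.
move=> Tinj mu0 K Hz.
have H1 := kkt_lower z K.
have H2 := Hz x.
have H3 := inner_ge0 (T *m (z - x)).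
have H4 : inner (T *m (z - x)) (T *m (z - x)) = 0.
  apply/eqP; rewrite eq_le H3 andbT.
  have : mu / 2 * inner (T *m (z - x)) (T *m (z - x)) <= 0 by lra.
  by rewrite pmulr_rle0 // divr_gt0.
have := inner_eq0 H4; rewrite mulmxBr => /eqP; rewrite subr_eq0 => /eqP.
exact: Tinj.
Qed.

Lemma lim0 (R : realType) (A B rho : R) : 0 < rho -> 0 <= B ->
  (forall tau, 0 < tau -> tau <= rho -> A <= B * tau) -> A <= 0.
Proof.
move=> r0 B0 H; rewrite leNgt; apply/negP => A0.
set D := A + rho * B + rho.
have D0 : 0 < D by rewrite /D; nra.
set tau := rho * A / D.
have tD : tau * D = rho * A by rewrite /tau divfK // gt_eqF.
have t0 : 0 < tau by rewrite /tau divr_gt0 // mulr_gt0.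
have tr : tau <= rho.
  rewrite /tau ler_pdivrMr //; rewrite /D; nra.
have := H tau t0 tr.
have : B * tau * D < A * D.
  rewrite -mulrA tD /D; nra.
move=> h1 h2.
have : A * D <= B * tau * D by rewrite ler_pM2r.
lra.
Qed.

Lemma pert (R : realType) (m n : nat) (T : 'M[R]_(m, n)) (y : 'cV[R]_m)
  (mu : R) (x : 'cV[R]_n) (j : 'I_n) (t : R) :
  is_lasso_minimizer T y mu x ->
  0 <= mu / 2 * (t ^+ 2 * inner (T *m dvec R j) (T *m dvec R j))
       - mu * t * corr T y x j 0 + (`|x j 0 + t| - `|x j 0|).
Proof.
move=> Hx.
have := Hx (x + t *: dvec R j); rewrite -subr_ge0 obj_diff.
have -> : x + t *: dvec R j - x = t *: dvec R j by rewrite addrC addKr.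
rewrite -scalemxAr innerZl inner_sym innerZl. rewrite [t * (t * _)]mulrA -expr2.
rewrite (bigD1 j) //= big1 ?addr0.
  rewrite !mxE eqxx mulr1 /corr; lra.
move=> k /negPf kj; rewrite !mxE kj mulr0 addr0 subrr; lra.
Qed.

Lemma sq_norm1 (R : realType) (s : R) : `|s| = 1 -> s * s = 1.
Proof. by move=> s1; rewrite -expr2 -real_normK ?num_real // s1 expr1n. Qed.

Lemma kkt_nec (R : realType) (m n : nat) (T : 'M[R]_(m, n)) (y : 'cV[R]_m)
  (mu : R) (x : 'cV[R]_n) : 0 < mu -> is_lasso_minimizer T y mu x ->
  forall j, `|mu * corr T y x j 0| <= 1 /\
            (x j 0 != 0 -> mu * corr T y x j 0 = Num.sg (x j 0)).
Proof.
move=> mu0 Hx j.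
set C := corr T y x j 0.
set a := inner (T *m dvec R j) (T *m dvec R j).
have a0 : 0 <= a by apply: inner_ge0.
have P := fun t => pert j t Hx; rewrite -/a -/C in P.
have B0 : 0 <= mu / 2 * a by rewrite mulr_ge0 // divr_ge0 // ltW.
have N1 : `|mu * C| <= 1.
  rewrite normrM (gtr0_norm mu0).
  have key : forall s : R, `|s| = 1 -> s * C = `|C| ->
     forall tau, 0 < tau -> tau <= 1 -> mu * `|C| - 1 <= mu / 2 * a * tau.
    move=> s s1 sC tau t0 _.
    have := P (s * tau).
    have -> : (s * tau) ^+ 2 = tau ^+ 2.
      by rewrite exprMn [s ^+ 2]expr2 sq_norm1 // mul1r.
    have : `|x j 0 + s * tau| - `|x j 0| <= tau.
      apply: (le_trans (lerB_dist _ _)); rewrite addrAC subrr add0r normrM s1 mul1r.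
      by rewrite ger0_norm // ltW.
    have -> : mu * (s * tau) * C = mu * tau * `|C| by rewrite -sC; ring.
    move=> h1 h2.
    have : 0 <= tau * (mu / 2 * a * tau - (mu * `|C| - 1)).
      rewrite expr2 in h2; nra.
    by rewrite pmulr_rge0 // subr_ge0.
  have : mu * `|C| - 1 <= 0.
    case: (lerP 0 C) => hC.
      by apply: (lim0 ltr01 B0); apply: (key 1); rewrite ?normr1 ?mul1r ?ger0_norm.
    apply: (lim0 ltr01 B0); apply: (key (-1)); rewrite ?normrN ?normr1 //.
    by rewrite mulN1r ltr0_norm.
  lra.
split=> // xn0.
have key : forall s : R, `|s| = 1 -> s * x j 0 = `|x j 0| ->
   forall tau, 0 < tau -> tau <= `|x j 0| -> 1 - mu * s * C <= mu / 2 * a * tau.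
  move=> s s1 sx tau t0 tx.
  have := P (- s * tau).
  have s2 : s * s = 1 by apply: sq_norm1.
  have -> : (- s * tau) ^+ 2 = tau ^+ 2 by rewrite expr2 expr2; nra.
  have -> : x j 0 + - s * tau = s * (`|x j 0| - tau).
    rewrite mulrBr -sx mulrA s2 mul1r; ring.
  rewrite normrM s1 mul1r ger0_norm ?subr_ge0 //.
  move=> h.
  have : 0 <= tau * (mu / 2 * a * tau - (1 - mu * s * C)).
    rewrite expr2 in h; nra.
  by rewrite pmulr_rge0 // subr_ge0.
have [s1 sx] : `|Num.sg (x j 0)| = 1 /\ Num.sg (x j 0) * x j 0 = `|x j 0|.
  case: (ltrgtP (x j 0) 0) => hx; last by rewrite hx eqxx in xn0.
    by rewrite ltr0_sg // normrN normr1 ltr0_norm // mulN1r.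
  by rewrite gtr0_sg // normr1 gtr0_norm // mul1r.
have xp : 0 < `|x j 0| by rewrite normr_gt0.
have := lim0 xp B0 (key _ s1 sx).
have : Num.sg (x j 0) * Num.sg (x j 0) = 1.
  exact: sq_norm1.
move: N1; set sg := Num.sg (x j 0) => N1 ss h.
have : mu * C * sg <= 1 by apply: (le_trans (ler_norm _)); rewrite normrM s1 mulr1.
have h2 : 1 <= mu * C * sg by lra.
move=> h3.
have e : mu * C * sg = 1 by lra.
by rewrite -[mu * C]mulr1 -ss mulrA e mul1r.
Qed.

Definition Emx (R : realType) (n : nat) (J : {set 'I_n}) : 'M[R]_(n, #|J|) :=
  \matrix_(j, l) ((enum_val l == j)%:R).

Lemma colsubJE (R : realType) (m n : nat) (T : 'M[R]_(m, n)) (J : {set 'I_n}) :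
  colsubJ T J = T *m Emx R J.
Proof.
apply/matrixP => i l; rewrite /colsubJ !mxE (bigD1 (enum_val l)) //= big1.
  by rewrite mxE eqxx mulr1 addr0.
by move=> j /negPf jl; rewrite mxE eq_sym jl mulr0.
Qed.

Lemma Emx_val (R : realType) (n : nat) (J : {set 'I_n}) (u : 'cV[R]_#|J|) l :
  (Emx R J *m u) (enum_val l) 0 = u l 0.
Proof.
rewrite mxE (bigD1 l) //= big1 ?mxE ?eqxx ?mul1r ?addr0 //.
by move=> k kl; rewrite mxE (inj_eq enum_val_inj) (negPf kl) mul0r.
Qed.

Lemma Emx_out (R : realType) (n : nat) (J : {set 'I_n}) (u : 'cV[R]_#|J|) j :
  j \notin J -> (Emx R J *m u) j 0 = 0.
Proof.
move=> jJ; rewrite mxE big1 // => k _; rewrite mxE.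
case: eqP => [e|]; last by rewrite mul0r.
by move: (enum_valP k); rewrite e (negPf jJ).
Qed.

Lemma Emx_tr (R : realType) (n : nat) (J : {set 'I_n}) (w : 'cV[R]_n) l :
  ((Emx R J)^T *m w) l 0 = w (enum_val l) 0.
Proof.
rewrite mxE (bigD1 (enum_val l)) //= big1 ?mxE ?eqxx ?mul1r ?addr0 //.
by move=> k /negPf kl; rewrite !mxE eq_sym kl mul0r.
Qed.

Lemma EtE (R : realType) (n : nat) (J : {set 'I_n}) :
  (Emx R J)^T *m Emx R J = 1%:M.
Proof.
apply/matrixP => l l'; rewrite !mxE (bigD1 (enum_val l)) //= big1.
  rewrite !mxE eqxx mul1r addr0 (inj_eq enum_val_inj) //.
  by rewrite eq_sym.
by move=> k /negPf kl; rewrite !mxE eq_sym kl mul0r.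
Qed.

Lemma GJ_unit (R : realType) (m n : nat) (T : 'M[R]_(m, n)) (J : {set 'I_n}) :
  injective (fun v : 'cV[R]_n => T *m v) ->
  (colsubJ T J)^T *m colsubJ T J \in unitmx.
Proof.
move=> Tinj; rewrite unitmxE unitfE; apply/negP => /det0P [v vn0 vG].
set w := Emx R J *m v^T.
have : inner (T *m w) (T *m w) = 0.
  rewrite colsubJE in vG.
  rewrite /inner /w trmx_mul trmx_mul trmxK.
  have -> : v *m (Emx R J)^T *m T^T *m (T *m (Emx R J *m v^T))
     = v *m ((T *m Emx R J)^T *m (T *m Emx R J)) *m v^T by rewrite trmx_mul !mulmxA.
  by rewrite vG mul0mx mxE.
move=> /inner_eq0; rewrite -(mulmx0 _ T) => /Tinj w0.
have : v^T = 0 by rewrite -[v^T]mul1mx -(EtE R J) -mulmxA -/w w0 mulmx0.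
by move/eqP; rewrite -trmx0 (inj_eq (@trmx_inj _ _ _)) (negPf vn0).
Qed.

Definition solJ (R : realType) (m n : nat) (T : 'M[R]_(m, n)) (J : {set 'I_n})
  (r : 'cV[R]_n) : 'cV[R]_n :=
  Emx R J *m (S_J T J *m ((Emx R J)^T *m r)).

Lemma solJ_out (R : realType) (m n : nat) (T : 'M[R]_(m, n)) (J : {set 'I_n})
  (r : 'cV[R]_n) j : j \notin J -> solJ T J r j 0 = 0.
Proof. exact: Emx_out. Qed.

Lemma solJ_eq (R : realType) (m n : nat) (T : 'M[R]_(m, n)) (J : {set 'I_n})
  (r : 'cV[R]_n) j :
  injective (fun v : 'cV[R]_n => T *m v) -> j \in J ->
  (T^T *m T *m solJ T J r) j 0 = r j 0.
Proof.
move=> Tinj jJ; rewrite -(enum_rankK_in jJ jJ); set l := enum_rank_in jJ j.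
rewrite -!Emx_tr /solJ.
have -> : (Emx R J)^T *m (T^T *m T *m (Emx R J *m (S_J T J *m ((Emx R J)^T *m r))))
  = ((colsubJ T J)^T *m colsubJ T J *m S_J T J) *m ((Emx R J)^T *m r).
  by rewrite colsubJE trmx_mul !mulmxA.
by rewrite /S_J mulmxV ?mul1mx // GJ_unit.
Qed.

Lemma S_J_sym (R : realType) (m n : nat) (T : 'M[R]_(m, n)) (J : {set 'I_n}) k l :
  S_J T J k l = S_J T J l k.
Proof.
have : (S_J T J)^T = S_J T J by rewrite /S_J trmx_inv trmx_mul trmxK.
by move/matrixP => /(_ l k); rewrite mxE.
Qed.

Lemma solJ_dvec (R : realType) (m n : nat) (T : 'M[R]_(m, n)) (J : {set 'I_n})
  (i : 'I_n) (iJ : i \in J) l :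
  solJ T J (dvec R i) (enum_val l) 0 = S_J T J (enum_rank_in iJ i) l.
Proof.
rewrite /solJ Emx_val mxE (bigD1 (enum_rank_in iJ i)) //= big1.
  by rewrite Emx_tr mxE (enum_rankK_in iJ iJ) eqxx mulr1 addr0 S_J_sym.
move=> k ki; rewrite Emx_tr mxE.
case: eqP => [e|]; last by rewrite mulr0.
by case/negP: ki; apply/eqP/enum_val_inj; rewrite e (enum_rankK_in iJ iJ).
Qed.

Lemma solJ_dom (R : realType) (m n : nat) (T : 'M[R]_(m, n)) (J : {set 'I_n})
  (i : 'I_n) :
  positive_cone_condition T -> i \in J ->
  \sum_(j | j != i) `|solJ T J (dvec R i) j 0| <= solJ T J (dvec R i) i 0.
Proof.
move=> PCC iJ.
have J0 : J != set0 by apply/set0Pn; exists i.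
have := PCC J J0 (enum_rank_in iJ i).
set l0 := enum_rank_in iJ i.
rewrite subr_ge0.
have -> : solJ T J (dvec R i) i 0 = S_J T J l0 l0.
  by rewrite -(solJ_dvec T iJ) (enum_rankK_in iJ iJ).
move=> H; apply: le_trans H; rewrite le_eqVlt; apply/orP; left; apply/eqP.
rewrite (bigID (fun j => j \in J)) /= [X in _ + X]big1; last first.
  by move=> j /andP [_ jJ]; rewrite solJ_out ?normr0.
rewrite addr0.
rewrite (eq_bigl (fun j => (j \in J) && (j != i))); last by move=> j; rewrite andbC.
rewrite big_enum_val_cond /=.
apply: eq_big => l.
  apply/idP/idP; apply: contra.
    by move/eqP => ->; rewrite (enum_rankK_in iJ iJ).
  by move/eqP => e; apply/eqP/enum_val_inj; rewrite e (enum_rankK_in iJ iJ).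
by move=> _; congr (`|_|); exact: solJ_dvec.
Qed.

Lemma inner_supp (R : realType) (n : nat) (J : {set 'I_n}) (u w z : 'cV[R]_n) :
  (forall j, j \notin J -> u j 0 = 0) -> (forall j, j \in J -> w j 0 = z j 0) ->
  inner u w = inner u z.
Proof.
move=> hu hw; rewrite !innerE; apply: eq_bigr => j _.
by case: (boolP (j \in J)) => jJ; [rewrite hw | rewrite hu ?mul0r].
Qed.

Lemma dvecE (R : realType) (n : nat) (i j : 'I_n) : dvec R i j 0 = (j == i)%:R.
Proof. by rewrite mxE. Qed.

Lemma D1 (R : realType) (m n : nat) (T : 'M[R]_(m, n)) (J : {set 'I_n})
  (s : 'cV[R]_n) (i : 'I_n) :
  injective (fun v : 'cV[R]_n => T *m v) -> positive_cone_condition T ->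
  (forall j, j \in J -> `|s j 0| = 1) -> i \in J ->
  0 <= s i 0 * solJ T J s i 0.
Proof.
move=> Tinj PCC s1 iJ.
set v := solJ T J (dvec R i); set d := solJ T J s.
have e1 : inner d (T^T *m T *m v) = d i 0.
  rewrite (@inner_supp _ _ J d _ (dvec R i)); first by rewrite inner_sym inner_dvec.
    by move=> j; apply: solJ_out.
  by move=> j jJ; rewrite solJ_eq.
have e2 : inner v (T^T *m T *m d) = inner v s.
  apply: (inner_supp (J := J)); first by move=> j; apply: solJ_out.
  by move=> j jJ; rewrite solJ_eq.
have : d i 0 = inner v s by rewrite -e1 -gram_sym e2.
rewrite innerE (bigD1 i) //= => ->.
rewrite mulrDr.
have dom := solJ_dom (R := R) PCC iJ; rewrite -/v in dom.
have ss : s i 0 * (v i 0 * s i 0) = v i 0.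
  by rewrite mulrA mulrC mulrA sq_norm1 ?mul1r // s1.
rewrite ss mulr_sumr.
have : - \sum_(j | j != i) `|v j 0| <= \sum_(j | j != i) s i 0 * (v j 0 * s j 0).
  rewrite -sumrN; apply: ler_sum => j _.
  case: (boolP (j \in J)) => jJ; last by rewrite /v solJ_out // normr0 oppr0 !mul0r mulr0.
  rewrite lerNl; apply: (le_trans (ler_norm _)); rewrite normrN !normrM !s1 //.
  by rewrite mul1r mulr1.
lra.
Qed.

Lemma D2 (R : realType) (m n : nat) (T : 'M[R]_(m, n)) (J : {set 'I_n})
  (s : 'cV[R]_n) (i : 'I_n) :
  injective (fun v : 'cV[R]_n => T *m v) -> positive_cone_condition T ->
  (forall j, j \in J -> `|s j 0| <= 1) -> i \notin J ->
  `|(T^T *m T *m solJ T J s) i 0| <= 1.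
Proof.
move=> Tinj PCC s1 iJ.
set K := i |: J.
have iK : i \in K by rewrite /K setU11.
set v := solJ T K (dvec R i); set d := solJ T J s.
set w := T^T *m T *m d.
have e1 : inner d (T^T *m T *m v) = 0.
  rewrite innerE big1 // => j _.
  case: (boolP (j \in J)) => jJ; last by rewrite /d solJ_out // mul0r.
  have jK : j \in K by rewrite /K setU1r.
  rewrite /v solJ_eq // dvecE.
  have -> : (j == i) = false by apply/negP => /eqP e; move: iJ; rewrite -e jJ.
  by rewrite mulr0.
have e2 : inner v w = v i 0 * w i 0 + \sum_(j | j != i) v j 0 * w j 0.
  by rewrite innerE (bigD1 i).
have dom := solJ_dom (R := R) PCC iK; rewrite -/v in dom.
have bnd : `|\sum_(j | j != i) v j 0 * w j 0| <= \sum_(j | j != i) `|v j 0|.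
  apply: (le_trans (ler_norm_sum _ _ _)); apply: ler_sum => j ji.
  case: (boolP (j \in J)) => jJ.
    rewrite normrM -[X in _ <= X]mulr1 ler_wpM2l //.
    by rewrite /w /d solJ_eq // s1.
  have jK : j \notin K by rewrite /K in_setU1 negb_or ji.
  by rewrite /v solJ_out // mul0r normr0.
have vw : v i 0 * w i 0 = - \sum_(j | j != i) v j 0 * w j 0.
  by apply/eqP; rewrite -addr_eq0 -e2 gram_sym e1.
have S0 : 0 <= \sum_(j | j != i) `|v j 0| by apply: sumr_ge0 => j _.
have vi0 : 0 < v i 0.
  rewrite lt_def (le_trans S0 dom) andbT; apply/negP => /eqP vi.
  have vz : v = 0.
    apply/matrixP => j k; rewrite (ord1 k) [RHS]mxE.
    case: (eqVneq j i) => [-> //|ji].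
    have Hs : \sum_(j | j != i) `|v j 0| = 0.
      by apply/eqP; rewrite eq_le S0 andbT; move: dom; rewrite vi.
    have Hn : forall j, j != i -> 0 <= `|v j 0| by move=> ? _; exact: normr_ge0.
    have := @psumr_eq0P _ _ _ _ Hn Hs j ji.
    by move/eqP; rewrite normr_eq0 => /eqP.
  have := solJ_eq (dvec R i) Tinj iK; rewrite -/v vz mulmx0 mxE dvecE eqxx.
  by move/eqP; rewrite eq_sym oner_eq0.
have : v i 0 * `|w i 0| <= v i 0 * 1.
  rewrite mulr1 -(gtr0_norm vi0) -normrM vw normrN (gtr0_norm vi0).
  exact: le_trans bnd dom.
by rewrite ler_pM2l.
Qed.

Lemma sg_mul_self (R : realType) (a : R) : Num.sg a * a = `|a|.
Proof.
case: (ltrgtP a 0) => ha.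
- by rewrite ltr0_sg // ltr0_norm // mulN1r.
- by rewrite gtr0_sg // gtr0_norm // mul1r.
- by rewrite ha mulr0 normr0.
Qed.

Theorem mainTheorem17 (R : realType) (m n : nat) (T : 'M[R]_(m, n))
  (y : 'cV[R]_m) (lam : R) (x : R -> 'cV[R]_n) :
  injective (fun v : 'cV[R]_n => T *m v) ->
  positive_cone_condition T ->
  (forall mu : R, 0 < mu -> is_lasso_minimizer T y mu (x mu)) ->
  0 < lam ->
  exists eps : R, 0 < eps < lam /\
    forall i : 'I_n, i \in supp (x lam) ->
      forall mu : R, lam - eps <= mu <= lam ->
        `|x mu i 0| <= `|x lam i 0|.
Proof.
move=> Tinj PCC Hmin lam0.
set x0 := x lam.
set J := supp x0.
have N := kkt_nec lam0 (Hmin lam lam0); rewrite -/x0 in N.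
set c0 := corr T y x0.
set s : 'cV[R]_n := \col_j Num.sg (x0 j 0).
have sE : forall j, s j 0 = Num.sg (x0 j 0) by move=> j; rewrite mxE.
have inJ : forall j, (j \in J) = (x0 j 0 != 0) by move=> j; rewrite inE.
have s1 : forall j, j \in J -> `|s j 0| = 1.
  by move=> j; rewrite inJ sE normr_sg => ->.
have s1' : forall j, j \in J -> `|s j 0| <= 1 by move=> j /s1 ->.
set d := solJ T J s.
have dout : forall j, j \notin J -> d j 0 = 0 by move=> j; apply: solJ_out.
have Gd : forall j, j \in J -> (T^T *m T *m d) j 0 = s j 0.
  by move=> j jJ; apply: solJ_eq.
have D1' : forall i, i \in J -> 0 <= s i 0 * d i 0.
  by move=> i iJ; apply: D1.
have D2' : forall i, i \notin J -> `|(T^T *m T *m d) i 0| <= 1.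
  by move=> i iJ; apply: D2.
set Q := 1 + \sum_j `|d j 0| / `|x0 j 0|.
have Sg0 : 0 <= \sum_j `|d j 0| / `|x0 j 0|.
  by apply: sumr_ge0 => j _; rewrite divr_ge0.
have Q1 : 1 <= Q by rewrite /Q lerDl.
have Q0 : 0 < Q by lra.
have Qj : forall j, j \in J -> `|d j 0| <= Q * `|x0 j 0|.
  move=> j jJ.
  have xj : 0 < `|x0 j 0| by rewrite normr_gt0 -inJ.
  have : `|d j 0| / `|x0 j 0| <= Q.
    apply: (le_trans _ (ler_wpDl ler01 (lexx _))).
    rewrite /Q (bigD1 j) //= lerDl; apply: sumr_ge0 => k _; rewrite divr_ge0 //.
  by rewrite ler_pdivrMr.
set del := Q^-1.
have del0 : 0 < del by rewrite invr_gt0.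
have delj : forall j, j \in J -> del * `|d j 0| <= `|x0 j 0|.
  move=> j jJ; have := Qj j jJ.
  by move=> H; rewrite /del mulrC ler_pdivrMr // mulrC.
set k := lam * del / (1 + lam * del).
have ld0 : 0 < lam * del by rewrite mulr_gt0.
have p1 : 0 < 1 + lam * del by lra.
have kk : k * (1 + lam * del) = lam * del by rewrite /k divfK // gt_eqF.
have k0 : 0 < k by rewrite /k divr_gt0.
have k1 : k < 1 by nra.
have kd : k <= lam * del by nra.
set eps := lam * k / 2.
exists eps; split.
  by apply/andP; split; rewrite /eps; nra.
move=> i iJ mu /andP [m1 m2].
have mu2 : lam / 2 <= mu by rewrite /eps in m1; nra.
have mu0 : 0 < mu by lra.
set h := mu^-1 - lam^-1.
have hE : h * (lam * mu) = lam - mu by rewrite /h; field; rewrite gt_eqF // gt_eqF.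
have h0 : 0 <= h.
  by rewrite /h subr_ge0 lef_pV2 // posrE.
have hd : h <= del.
  have A : h * (lam * mu) <= lam * k / 2 by rewrite hE; rewrite /eps in m1; lra.
  have B : lam * k / 2 <= lam * (lam * del) / 2.
    by rewrite ler_pM2r ?ler_pM2l // invr_gt0 ltr0Sn.
  have C : lam * (lam / 2) <= lam * mu by rewrite ler_pM2l.
  rewrite leNgt; apply/negP => hgt.
  have D : del * (lam * mu) < h * (lam * mu) by rewrite ltr_pM2r // mulr_gt0.
  have E : del * (lam * (lam / 2)) <= del * (lam * mu) by rewrite ler_pM2l.
  have F : lam * (lam * del) / 2 = del * (lam * (lam / 2)) by ring.
  lra.
set xt := x0 - h *: d.
have xtE : forall j, xt j 0 = x0 j 0 - h * d j 0 by move=> j; rewrite !mxE.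
have cE : forall j, corr T y xt j 0 = c0 j 0 + h * (T^T *m T *m d) j 0.
  move=> j; rewrite /corr.
  have -> : y - T *m xt = (y - T *m x0) + h *: (T *m d).
    by rewrite /xt mulmxBr -scalemxAr opprD opprK addrA.
  by rewrite mulmxDr -scalemxAr mulmxA [in LHS]mxE [X in _ + X]mxE.
have signJ : forall j, j \in J ->
    s j 0 * xt j 0 = `|xt j 0| /\ s j 0 * xt j 0 <= `|x0 j 0|.
  move=> j jJ.
  have sx : s j 0 * x0 j 0 = `|x0 j 0| by rewrite sE sg_mul_self.
  have e : s j 0 * xt j 0 = `|x0 j 0| - h * (s j 0 * d j 0).
    by rewrite xtE mulrBr sx; ring.
  have b1 : h * (s j 0 * d j 0) <= del * `|d j 0|.
    apply: le_trans (_ : h * `|d j 0| <= _); last by rewrite ler_wpM2r.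
    rewrite ler_wpM2l //; apply: (le_trans (ler_norm _)).
    by rewrite normrM s1 // mul1r.
  have b2 := delj j jJ.
  have b3 : 0 <= h * (s j 0 * d j 0) by rewrite mulr_ge0 // D1'.
  have p : 0 <= s j 0 * xt j 0 by rewrite e; lra.
  split; last by rewrite e; lra.
  by rewrite -(ger0_norm p) normrM s1 // mul1r.
have KKTt : KKT T y mu xt.
  move=> j; rewrite cE.
  case: (boolP (j \in J)) => jJ.
    have Nj := (N j).2; rewrite -inJ in Nj; have {}Nj := Nj jJ.
    rewrite -/c0 -sE in Nj.
    have c0E : c0 j 0 = s j 0 / lam by rewrite -Nj mulrAC mulfV ?mul1r // gt_eqF.
    have e : mu * (c0 j 0 + h * (T^T *m T *m d) j 0) = s j 0.
      by rewrite Gd // c0E /h; field; rewrite gt_eqF // gt_eqF.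
    by rewrite e s1 //; split => //; case: (signJ j jJ).
  have x0j : x0 j 0 = 0 by apply/eqP; move: jJ; rewrite inJ negbK.
  have xtj : xt j 0 = 0 by rewrite xtE x0j dout // mulr0 subrr.
  rewrite xtj mulr0 normr0; split => //.
  have Nj := (N j).1; rewrite -/c0 normrM (gtr0_norm lam0) in Nj.
  have w1 := D2' j jJ.
  rewrite normrM (gtr0_norm mu0).
  have t1 : `|c0 j 0 + h * (T^T *m T *m d) j 0| <= `|c0 j 0| + h * 1.
    apply: (le_trans (ler_normD _ _)); rewrite lerD2l normrM (ger0_norm h0).
    by rewrite ler_wpM2l.
  have t2 : `|c0 j 0| <= lam^-1 by rewrite -[lam^-1]mul1r ler_pdivlMr // mulrC.
  have t3 : mu * (lam^-1 + h) = 1.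
    by rewrite /h addrC subrK mulfV // gt_eqF.
  have t4 : mu * `|c0 j 0 + h * (T^T *m T *m d) j 0| <= mu * (lam^-1 + h).
    by rewrite ler_pM2l //; lra.
  lra.
have xe : x mu = xt := kkt_unique Tinj mu0 KKTt (Hmin mu mu0).
rewrite xe -/x0.
have [e1 e2] := signJ i iJ.
by rewrite -e1.
Qed.
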